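(* Let $q$ be a prime power, $m\ge1$, $1\le k\le n$, $g_1,\dots,g_n\in\mathbb{F}_{q^m}$ linearly independent over $\mathbb{F}_q$, $\mathbf g=(g_1,\dots,g_n)$, $\mathbf r\in\mathbb{F}_{q^m}^n$. Let $B=\{b^{(1)},b^{(2)}\}$ be a minimal basis of the interpolation module $\mathfrak M(\mathbf r)$ with respect to the $(0,k-1)$-weighted term-over-position order, with $\mathrm{lpos}(b^{(i)})=i$ for $i=1,2$, and let $\ell_i$ be the $(0,k-1)$-weighted $q$-degree of $b^{(i)}$. Then $\ell_1+\ell_2=n+k-1$, or equivalently $\mathrm{qdeg}(b^{(1)}_1)+\mathrm{qdeg}(b^{(2)}_2)=n$, where $b^{(i)}=[b^{(i)}_1\ \ b^{(i)}_2]$.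
   Context: Write $[i]:=q^i$. A $q$-linearized polynomial is $f(x)=\sum_{i=0}^{d}a_ix^{[i]}$, $a_i\in\mathbb{F}_{q^m}$; if $a_d\ne0$, $d=\mathrm{qdeg}(f)$ ($\mathrm{qdeg}(0)=-\infty$). $\mathcal{L}_q(x,q^m)$ is the ring of these under addition and composition $\circ$. $\Pi_{\mathbf g}(x)=\prod_{u\in\langle g_1,\dots,g_n\rangle}(x-u)$ ($\mathbb{F}_q$-span), in $\mathcal{L}_q(x,q^m)$ of $q$-degree $n$. For $\mathbf r=(r_1,\dots,r_n)$, $\Lambda_{\mathbf g,\mathbf r}(x)=\sum_{i=1}^n(-1)^{n-i}r_i\det(\mathfrak D_i(\mathbf g,x))/\det(M_n(g_1,\dots,g_n))$ ($M_n(v_1,\dots,v_s)$ the $n\times s$ matrix with $(j,l)$ entry $v_l^{[j-1]}$, $\mathfrak D_i(\mathbf g,x)$ is $M_n(g_1,\dots,g_n,x)$ without column $i$), in $\mathcal{L}_q(x,q^m)$ with $\Lambda_{\mathbf g,\mathbf r}(g_i)=r_i$. $\mathfrak M(\mathbf r)$ is the set of all $\beta\circ[\Pi_{\mathbf g}\ \ 0]+\gamma\circ[-\Lambda_{\mathbf g,\mathbf r}\ \ x]$, $\beta,\gamma\in\mathcal{L}_q(x,q^m)$, where $h\circ[f_1\ f_2]=[h\circ f_1\ \ h\circ f_2]$. Monomials are $x^{[i]}e_j$, $j\in\{1,2\}$. $(0,k-1)$-weighted term-over-position order: with $w_1=0,w_2=k-1$, $x^{[i_1]}e_{j_1}<x^{[i_2]}e_{j_2}$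 iff $i_1+w_{j_1}<i_2+w_{j_2}$ or (equality and $j_1<j_2$). $\mathrm{lm},\mathrm{lt},\mathrm{lpos}$ of nonzero $f$: greatest monomial, that term with coefficient, its coordinate. The $(0,k-1)$-weighted $q$-degree of $[f_1\ f_2]$ is $\max\{\mathrm{qdeg}(f_1),\mathrm{qdeg}(f_2)+k-1\}$. A basis is a generating set with $\sum a_i\circ f^{(i)}=0\Rightarrow$ all $a_i=0$. $f$ reduces modulo a set $F$ of nonzero elements in one step if $h=f-\sum_i(b_ix^{[a_i]})\circ f^{(i)}$ for some $f^{(i)}\in F$, $b_i\in\mathbb{F}_{q^m}$, $a_i\ge0$ with $\mathrm{lm}(f)=x^{[a_i]}\circ\mathrm{lm}(f^{(i)})$ and $\mathrm{lt}(f)=\sum_i(b_ix^{[a_i]})\circ\mathrm{lt}(f^{(i)})$; $f$ is minimal w.r.t. $F$ if it cannot be so reduced; a basis $B$ is minimal if each $b\in B$ is minimal w.r.t. $B\setminus\{b\}$. *)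

(* Defs.v *)
From HB Require Import structures.
From mathcomp Require Import all_boot all_order all_algebra all_field.
Set Implicit Arguments.
Unset Strict Implicit.
Unset Printing Implicit Defensive.
Import GRing.Theory.
Local Open Scope ring_scope.

(* q-linearized polynomials over L = F_{q^m}, represented as ordinary
   polynomials whose support is contained in {q^i}; composition is \Po
   (h \Po f = h(f(x)) = h o f). *)
Definition linearized (L : fieldType) (q : nat) (f : {poly L}) : Prop :=
  forall i : nat, f`_i != 0 -> exists j : nat, i = (q ^ j)%N.

(* q-degree: d with x^[d] the top term (only meaningful for nonzero
   linearized f; qdeg 0 is set to 0 and never used as -oo, see wqdeg). *)
Definition qdeg (L : fieldType) (q : nat) (f : {poly L}) : nat :=
  trunc_log q (size f).-1.

Definition lpair (L : fieldType) := ({poly L} * {poly L})%type.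

Definition pzero (L : fieldType) : lpair L := (0, 0).
Definition padd (L : fieldType) (f g : lpair L) : lpair L :=
  (f.1 + g.1, f.2 + g.2).
Definition pcomp (L : fieldType) (h : {poly L}) (f : lpair L) : lpair L :=
  (h \Po f.1, h \Po f.2).

(* monomials x^[i] e_j encoded as (i, j), j in {1,2} *)
Definition mono := (nat * nat)%type.
Definition wdeg (k : nat) (a : mono) : nat :=
  (a.1 + (if a.2 == 2%N then k - 1 else 0))%N.
Definition mono_lt (k : nat) (a b : mono) : bool :=
  (wdeg k a < wdeg k b)%N || ((wdeg k a == wdeg k b) && (a.2 < b.2)%N).
Definition mono_max (k : nat) (a b : mono) : mono :=
  if mono_lt k a b then b else a.
(* x^[a] o x^[i] e_j = x^[a+i] e_j *)
Definition mono_comp (a : nat) (b : mono) : mono := ((a + b.1)%N, b.2).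

Definition coord (L : fieldType) (f : lpair L) (j : nat) : {poly L} :=
  if j == 1%N then f.1 else f.2.

Definition support (L : fieldType) (q : nat) (f : lpair L) : seq mono :=
  [seq (i, 1%N) | i <- [seq i <- iota 0 (size f.1) | f.1`_(q ^ i) != 0]] ++
  [seq (i, 2%N) | i <- [seq i <- iota 0 (size f.2) | f.2`_(q ^ i) != 0]].

(* leading monomial: the greatest monomial of the support ((0,1) is the
   least monomial, so it is a neutral start value) *)
Definition lm (L : fieldType) (q k : nat) (f : lpair L) : mono :=
  foldr (mono_max k) (0%N, 1%N) (support q f).
Definition lc (L : fieldType) (q k : nat) (f : lpair L) : L :=
  (coord f (lm q k f).2)`_(q ^ (lm q k f).1).
Definition mono_term (L : fieldType) (q : nat) (c : L) (a : mono) : lpair L :=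
  if a.2 == 1%N then (c *: 'X^(q ^ a.1), 0) else (0, c *: 'X^(q ^ a.1)).
Definition lt (L : fieldType) (q k : nat) (f : lpair L) : lpair L :=
  mono_term q (lc q k f) (lm q k f).
Definition lpos (L : fieldType) (q k : nat) (f : lpair L) : nat :=
  (lm q k f).2.

(* (0,k-1)-weighted q-degree max{qdeg f1, qdeg f2 + k - 1}, a zero
   component (qdeg = -oo) being ignored; f assumed nonzero *)
Definition wqdeg (L : fieldType) (q k : nat) (f : lpair L) : nat :=
  maxn (qdeg q f.1) (if f.2 == 0 then 0%N else (qdeg q f.2 + (k - 1))%N).

(* one-step reduction of f modulo the finite set F:
   h = f - sum_i (b_i x^[a_i]) o f^(i), with lm(f) = x^[a_i] o lm(f^(i))
   and lt(f) = sum_i (b_i x^[a_i]) o lt(f^(i)) *)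
Definition reduces (L : fieldType) (q k : nat) (f : lpair L)
    (F : seq (lpair L)) : Prop :=
  exists s : seq (L * nat * lpair L),
    [/\ forall t, t \in s -> t.2 \in F,
        forall t, t \in s -> lm q k f = mono_comp t.1.2 (lm q k t.2)
      & lt q k f = foldr (@padd L) (pzero L)
                    [seq pcomp (t.1.1 *: 'X^(q ^ t.1.2)) (lt q k t.2) | t <- s]].

Definition minimal_wrt (L : fieldType) (q k : nat) (f : lpair L)
    (F : seq (lpair L)) : Prop := ~ reduces q k f F.

(* linear independence over F_q = {c | c^q = c} *)
Definition Fq_lin_indep (L : fieldType) (q n : nat) (g : n.-tuple L) : Prop :=
  forall c : 'I_n -> L, (forall i, c i ^+ q = c i) ->
    \sum_(i < n) c i * g`_i = 0 -> forall i, c i = 0.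

Definition Fq_span (L : finFieldType) (q n : nat) (g : n.-tuple L) : {set L} :=
  [set x : L | [exists c : {ffun 'I_n -> L},
      [forall i, c i ^+ q == c i] && (x == \sum_(i < n) c i * g`_i)]].

Definition Pi_g (L : finFieldType) (q n : nat) (g : n.-tuple L) : {poly L} :=
  \prod_(u in Fq_span q g) ('X - u%:P).

Definition Mmat (L : fieldType) (q n : nat) (g : n.-tuple L) : 'M[L]_n :=
  \matrix_(j < n, l < n) g`_l ^+ (q ^ j).

(* D_i(g,x) = M_n(g_1,..,g_n,x) without column i (0-based i) *)
Definition Dmat (L : fieldType) (q n : nat) (g : n.-tuple L) (i : nat)
    : 'M[{poly L}]_n :=
  \matrix_(j < n, l < n)
    if (l.+1 < n)%N then (g`_(if (l < i)%N then (l : nat) else l.+1) ^+ (q ^ j))%:P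
    else 'X^(q ^ j).

Definition Lambda (L : fieldType) (q n : nat) (g r : n.-tuple L) : {poly L} :=
  \sum_(i < n) (((-1) ^+ (n - i.+1) * r`_i / \det (Mmat q g)) *: \det (Dmat q g i)).

Definition Mmod (L : finFieldType) (q n : nat) (g r : n.-tuple L)
    (f : lpair L) : Prop :=
  exists beta gamma : {poly L}, [/\ linearized q beta, linearized q gamma &
    f = padd (pcomp beta (Pi_g q g, 0)) (pcomp gamma (- Lambda q g r, 'X))].

Definition is_basis2 (L : fieldType) (q : nat) (M : lpair L -> Prop)
    (b1 b2 : lpair L) : Prop :=
  [/\ M b1, M b2,
      (forall f, M f <-> exists beta gamma : {poly L},
          [/\ linearized q beta, linearized q gamma &
              f = padd (pcomp beta b1) (pcomp gamma b2)])
    & forall beta gamma : {poly L}, linearized q beta -> linearized q gamma ->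
        padd (pcomp beta b1) (pcomp gamma b2) = pzero L ->
        beta = 0 /\ gamma = 0].

Definition is_minimal_basis2 (L : fieldType) (q k : nat)
    (M : lpair L -> Prop) (b1 b2 : lpair L) : Prop :=
  [/\ is_basis2 q M b1 b2, minimal_wrt q k b1 [:: b2]
    & minimal_wrt q k b2 [:: b1]].

(* Main.v *)
Require Import Defs.
From HB Require Import structures.
From mathcomp Require Import all_boot all_order all_algebra all_field.
From mathcomp Require Import zify.
Set Implicit Arguments.
Unset Strict Implicit.
Unset Printing Implicit Defensive.
Import GRing.Theory.
Local Open Scope ring_scope.

Lemma lin0 (L : fieldType) q : linearized q (0 : {poly L}).
Proof. by move=> i; rewrite coef0 eqxx. Qed.

Lemma linD (L : fieldType) q (f h : {poly L}) :
  linearized q f -> linearized q h -> linearized q (f + h).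
Proof.
move=> Hf Hh i; rewrite coefD => H.
case: (eqVneq (f`_i) 0) => [H0|/Hf//]; apply: Hh; by move: H; rewrite H0 add0r.
Qed.

Lemma linZ (L : fieldType) q c (f : {poly L}) :
  linearized q f -> linearized q (c *: f).
Proof.
move=> Hf i; rewrite coefZ => H; apply: Hf; apply: contraNneq H => ->.
by rewrite mulr0.
Qed.

Lemma linN (L : fieldType) q (f : {poly L}) :
  linearized q f -> linearized q (- f).
Proof. by move=> Hf; rewrite -scaleN1r; apply: linZ. Qed.

Lemma linB (L : fieldType) q (f h : {poly L}) :
  linearized q f -> linearized q h -> linearized q (f - h).
Proof. by move=> Hf Hh; apply: linD => //; apply: linN. Qed.

Lemma linXq (L : fieldType) q j : linearized q ('X^(q ^ j) : {poly L}).
Proof.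
move=> i; rewrite coefXn; case: (eqVneq i (q ^ j)%N) => [->|_]; first by exists j.
by rewrite eqxx.
Qed.

Lemma lin_sum (L : fieldType) q (I : Type) (r : seq I) (P : pred I)
  (F : I -> {poly L}) :
  (forall i, P i -> linearized q (F i)) ->
  linearized q (\sum_(i <- r | P i) F i).
Proof.
move=> H; apply: (big_ind (linearized q)) => //; first exact: lin0.
exact: linD.
Qed.

Lemma lin_coef0 (L : fieldType) q (f : {poly L}) :
  (0 < q)%N -> linearized q f -> f`_0 = 0.
Proof.
move=> q0 Hf; apply/eqP; apply/negPn/negP => /Hf [j].
move=> E; move: (expn_gt0 q j); rewrite q0 -E //.
Qed.

Lemma lin_repr_gen (L : fieldType) q (f : {poly L}) N :
  (1 < q)%N -> linearized q f -> (forall j, (N <= j)%N -> f`_(q ^ j) = 0) ->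
  f = \sum_(j < N) f`_(q ^ j) *: 'X^(q ^ j).
Proof.
move=> q1 Hf HN; apply/polyP => i; rewrite coef_sum.
under eq_bigr do rewrite coefZ coefXn.
case: (eqVneq (f`_i) 0) => [H0|/Hf [j Ej]].
  rewrite H0 big1 // => j _; case: (eqVneq i (q ^ j)%N) => [E|_].
    by rewrite -E H0 mul0r.
  by rewrite mulr0.
case: (ltnP j N) => [jN|jN]; last first.
  rewrite Ej HN // big1 // => j' _; case: (eqVneq (q ^ j)%N (q ^ j')%N) => [/(expnI q1) E|_].
    by rewrite -E HN ?mul0r.
  by rewrite mulr0.
rewrite (bigD1 (Ordinal jN)) //= Ej eqxx mulr1 big1 ?addr0 // => j' Hj'.
case: (eqVneq (q ^ j)%N (q ^ j')%N) => [/(expnI q1) E|_]; last by rewrite mulr0.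
by move: Hj'; rewrite -val_eqE /= E eqxx.
Qed.

Lemma lin_repr (L : fieldType) q (f : {poly L}) :
  (1 < q)%N -> linearized q f ->
  f = \sum_(j < size f) f`_(q ^ j) *: 'X^(q ^ j).
Proof.
move=> q1 Hf; apply: lin_repr_gen => // j Hj.
have /leq_sizeP H := leqnn (size f); apply: H.
apply: leq_trans Hj _; apply: ltnW; exact: ltn_expl.
Qed.

Lemma pnat_pow (R : comNzRingType) q j : [pchar R].-nat q -> [pchar R].-nat (q ^ j)%N.
Proof. by move=> H; rewrite pnatX H. Qed.

Lemma frobD (R : comNzRingType) q (x y : R) : [pchar R].-nat q ->
  (x + y) ^+ q = x ^+ q + y ^+ q.
Proof. exact: exprDn_pchar. Qed.

Lemma frob_sum (R : comNzRingType) q (I : Type) (r : seq I) (P : pred I) (F : I -> R) :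
  [pchar R].-nat q -> (0 < q)%N ->
  (\sum_(i <- r | P i) F i) ^+ q = \sum_(i <- r | P i) F i ^+ q.
Proof.
move=> Hc q0; apply: (big_morph (fun x => x ^+ q)).
  by move=> x y; apply: frobD.
by rewrite expr0n eqn0Ngt q0.
Qed.

Lemma charpolyq (L : fieldType) q : [pchar L].-nat q -> [pchar {poly L}].-nat q.
Proof.
move=> H; rewrite (@eq_pnat [pchar {poly L}] [pchar L]) // => x; by rewrite pchar_poly.
Qed.

Lemma comp_sum (L : fieldType) (I : Type) (r : seq I) (P : pred I) (F : I -> {poly L}) (R : {poly L}) :
  (\sum_(i <- r | P i) F i) \Po R = \sum_(i <- r | P i) (F i \Po R).
Proof.
apply: (big_morph (fun p => p \Po R)); last exact: comp_poly0.
by move=> x y; rewrite comp_polyD.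
Qed.

Lemma expq_fix (L : fieldType) q (c : L) j : c ^+ q = c -> c ^+ (q ^ j)%N = c.
Proof.
move=> H; elim: j => [|j IH]; first by rewrite expn0 expr1.
by rewrite expnSr exprM IH H.
Qed.

Lemma lin_hornerD (L : fieldType) q (f : {poly L}) x y :
  (1 < q)%N -> [pchar L].-nat q -> linearized q f ->
  f.[x + y] = f.[x] + f.[y].
Proof.
move=> q1 Hc Hf; rewrite (lin_repr q1 Hf) !horner_sum -big_split /=.
apply: eq_bigr => j _; rewrite !hornerZ !hornerXn -mulrDr frobD //.
exact: pnat_pow.
Qed.

Lemma lin_horner0 (L : fieldType) q (f : {poly L}) :
  (1 < q)%N -> linearized q f -> f.[0] = 0.
Proof.
move=> q1 Hf; rewrite horner_coef0; exact: (lin_coef0 (ltnW q1) Hf).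
Qed.

Lemma lin_hornerFq (L : fieldType) q (f : {poly L}) c x :
  (1 < q)%N -> linearized q f -> c ^+ q = c ->
  f.[c * x] = c * f.[x].
Proof.
move=> q1 Hf Hcq; rewrite (lin_repr q1 Hf) !horner_sum mulr_sumr.
apply: eq_bigr => j _; rewrite !hornerZ !hornerXn exprMn expq_fix //.
by rewrite mulrCA.
Qed.

Lemma lin_horner_sum (L : fieldType) q (f : {poly L}) (I : Type) (r : seq I) (P : pred I) (F : I -> L) :
  (1 < q)%N -> [pchar L].-nat q -> linearized q f ->
  f.[\sum_(i <- r | P i) F i] = \sum_(i <- r | P i) f.[F i].
Proof.
move=> q1 Hc Hf; elim/big_rec2: _ => [|i y1 y2 _ <-].
  exact: (lin_horner0 q1 Hf).
exact: (lin_hornerD _ _ q1 Hc Hf).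
Qed.

Lemma lin_compD (L : fieldType) q (f P Q : {poly L}) :
  (1 < q)%N -> [pchar L].-nat q -> linearized q f ->
  f \Po (P + Q) = (f \Po P) + (f \Po Q).
Proof.
move=> q1 Hc Hf; have E := lin_repr q1 Hf.
rewrite E !comp_sum -big_split /=.
apply: eq_bigr => j _; rewrite !comp_polyZ !comp_Xn_poly -scalerDr frobD //.
apply: pnat_pow; exact: charpolyq.
Qed.

Lemma lin_compN (L : fieldType) q (f P : {poly L}) :
  (1 < q)%N -> [pchar L].-nat q -> linearized q f ->
  f \Po (- P) = - (f \Po P).
Proof.
move=> q1 Hc Hf; apply/eqP; rewrite -subr_eq0 opprK -(lin_compD _ _ q1 Hc Hf) addNr.
by rewrite comp_poly0r (lin_coef0 (ltnW q1) Hf).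
Qed.

Lemma lin_compB (L : fieldType) q (f P Q : {poly L}) :
  (1 < q)%N -> [pchar L].-nat q -> linearized q f ->
  f \Po (P - Q) = (f \Po P) - (f \Po Q).
Proof. by move=> q1 Hc Hf; rewrite (lin_compD _ _ q1 Hc Hf) (lin_compN _ q1 Hc Hf). Qed.

Lemma lin_powq (L : fieldType) q (P : {poly L}) :
  (1 < q)%N -> [pchar L].-nat q -> linearized q P -> linearized q (P ^+ q).
Proof.
move=> q1 Hc HP; rewrite (lin_repr q1 HP) frob_sum ?charpolyq //; last exact: ltnW.
apply: lin_sum => j _; rewrite exprZn -exprM -expnSr; apply: linZ; exact: linXq.
Qed.

Lemma lin_powqj (L : fieldType) q (P : {poly L}) j :
  (1 < q)%N -> [pchar L].-nat q -> linearized q P -> linearized q (P ^+ (q ^ j)%N).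
Proof.
move=> q1 Hc HP; elim: j => [|j IH]; first by rewrite expn0 expr1.
by rewrite expnSr exprM; apply: lin_powq.
Qed.

Lemma lin_comp (L : fieldType) q (f P : {poly L}) :
  (1 < q)%N -> [pchar L].-nat q -> linearized q f -> linearized q P ->
  linearized q (f \Po P).
Proof.
move=> q1 Hc Hf HP; rewrite (lin_repr q1 Hf) comp_sum.
apply: lin_sum => j _; rewrite comp_polyZ comp_Xn_poly; apply: linZ.
exact: lin_powqj.
Qed.

Definition Dg (L : fieldType) (f : {poly L}) : nat := (size f).-1.

Lemma Dg_comp (L : fieldType) (f P : {poly L}) : Dg (f \Po P) = (Dg f * Dg P)%N.
Proof. exact: size_comp_poly. Qed.

Lemma lead_nz (L : fieldType) (f : {poly L}) : f != 0 -> f`_(Dg f) != 0.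
Proof. by move=> f0; rewrite /Dg -lead_coefE lead_coef_eq0. Qed.

Lemma lin_Dg (L : fieldType) q (f : {poly L}) :
  (1 < q)%N -> linearized q f -> f != 0 -> Dg f = (q ^ qdeg q f)%N.
Proof.
move=> q1 Hf f0; move/Hf: (lead_nz f0) => [j Ej].
by rewrite /qdeg -/(Dg f) Ej trunc_expnK.
Qed.

Lemma Dg0 (L : fieldType) : Dg (0 : {poly L}) = 0%N.
Proof. by rewrite /Dg size_poly0. Qed.

Lemma Dg_eq0 (L : fieldType) (f : {poly L}) : (Dg f == 0%N) = (size f <= 1)%N.
Proof. by rewrite /Dg; case: (size f) => [|[|n]]. Qed.

Lemma lin_Dg_eq0 (L : fieldType) q (f : {poly L}) :
  (1 < q)%N -> linearized q f -> (Dg f == 0%N) = (f == 0).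
Proof.
move=> q1 Hf; case: (eqVneq f 0) => [->|f0]; first by rewrite Dg0.
rewrite (lin_Dg q1 Hf f0) expn_eq0; case: q q1 {Hf} => //.
Qed.

Lemma leq_Dg_coef (L : fieldType) (f : {poly L}) i : (Dg f < i)%N -> f`_i = 0.
Proof.
move=> H; have : (size f <= i)%N by move: H; rewrite /Dg; case: (size f).
by move/leq_sizeP; apply.
Qed.

Lemma coef_le_Dg (L : fieldType) (f : {poly L}) i : f`_i != 0 -> (i <= Dg f)%N.
Proof.
by move=> H; rewrite leqNgt; apply/negP => /leq_Dg_coef E; rewrite E eqxx in H.
Qed.

Definition rk (k : nat) (a : mono) : nat := (3 * wdeg k a + a.2)%N.

Lemma mono_lt_rk k (a b : mono) : (a.2 < 3)%N -> (b.2 < 3)%N ->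
  mono_lt k a b = (rk k a < rk k b)%N.
Proof.
rewrite /mono_lt /rk; move: (wdeg k a) (wdeg k b) => x y.
case: a b => [a1 a2] [b1 b2] /= Ha Hb.
apply/idP/idP.
  case/orP => [H|/andP [/eqP -> H]]; lia.
move=> H; case: (ltngtP x y) => Hxy //=; lia.
Qed.

Lemma lm_spec k (s : seq mono) : all (fun a : mono => a.2 < 3)%N s ->
  let m := foldr (mono_max k) (0%N, 1%N) s in
  [/\ m = (0%N, 1%N) \/ m \in s, (m.2 < 3)%N &
      forall a, a \in s -> (rk k a <= rk k m)%N].
Proof.
elim: s => [|a s IH] /=; first by split => //; left.
case/andP=> Ha /IH [Hm Hm2 Hmax]; set m := foldr _ _ s in Hm Hm2 Hmax *.
rewrite /mono_max (mono_lt_rk _ Ha Hm2).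
case: ltnP => H; split => //.
- by case: Hm => [->|Hm]; [left|right; rewrite in_cons Hm orbT].
- move=> b; rewrite in_cons => /orP [/eqP ->|/Hmax//]; exact: ltnW.
- by right; rewrite in_cons eqxx.
- move=> b; rewrite in_cons => /orP [/eqP ->//|/Hmax Hb]; exact: leq_trans Hb H.
Qed.

Lemma mem_supp (L : fieldType) q (f : lpair L) i j :
  ((i, j) \in Defs.support q f) =
  ((j == 1%N) && (i < size f.1)%N && (f.1`_(q ^ i) != 0)) ||
  ((j == 2%N) && (i < size f.2)%N && (f.2`_(q ^ i) != 0)).
Proof.
rewrite /Defs.support mem_cat; congr orb.
  apply/mapP/idP => [[x]|/andP [/andP [/eqP -> H1] H2]].
    rewrite mem_filter mem_iota add0n => /andP [Hc /andP [_ Hs]] [-> ->].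
    by rewrite eqxx Hc Hs.
  by exists i => //; rewrite mem_filter mem_iota add0n H1 H2.
apply/mapP/idP => [[x]|/andP [/andP [/eqP -> H1] H2]].
  rewrite mem_filter mem_iota add0n => /andP [Hc /andP [_ Hs]] [-> ->].
  by rewrite eqxx Hc Hs.
by exists i => //; rewrite mem_filter mem_iota add0n H1 H2.
Qed.

Lemma supp_small (L : fieldType) q (f : lpair L) :
  all (fun a : mono => a.2 < 3)%N (Defs.support q f).
Proof.
apply/allP => [[i j]] /=; rewrite mem_supp.
by case/orP => /andP [/andP [/eqP -> _] _].
Qed.

Lemma supp_top (L : fieldType) q (f : lpair L) j (h : {poly L}) :
  (1 < q)%N -> (j == 1%N) || (j == 2%N) -> h = Defs.coord f j ->
  linearized q h -> h != 0 -> (qdeg q h, j) \in Defs.support q f.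
Proof.
move=> q1 Hj Eh Hh h0; rewrite mem_supp.
have E := lin_Dg q1 Hh h0.
have c1 : h`_(q ^ qdeg q h) != 0 by rewrite -E lead_nz.
have c2 : (qdeg q h < size h)%N.
  apply: (@leq_trans (q ^ qdeg q h).+1); first by rewrite ltnS ltnW // ltn_expl.
  by rewrite -E /Dg prednK // size_poly_gt0.
case/orP: Hj => /eqP Ej; move: Eh; rewrite /Defs.coord Ej /= => Eh; subst h.
  by rewrite c1 c2.
by rewrite c1 c2 /=.
Qed.

Lemma supp_le (L : fieldType) q (f : lpair L) i j (h : {poly L}) :
  (1 < q)%N -> (i, j) \in Defs.support q f -> h = Defs.coord f j -> linearized q h ->
  h != 0 /\ (i <= qdeg q h)%N.
Proof.
move=> q1 Hs Eh Hh; have Hc : h`_(q ^ i) != 0.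
  move: Hs; rewrite mem_supp Eh /coord.
  by case/orP => /andP [/andP [/eqP -> _] H] //.
have h0 : h != 0 by apply: contraNneq Hc => ->; rewrite coef0.
split => //; move: (coef_le_Dg Hc); rewrite (lin_Dg q1 Hh h0).
by rewrite leq_exp2l.
Qed.

Lemma lpos1_spec (L : fieldType) q k (f : lpair L) :
  (1 < q)%N -> linearized q f.1 -> linearized q f.2 -> (f.1 != 0) || (f.2 != 0) ->
  lpos q k f = 1%N ->
  f.1 != 0 /\ (f.2 = 0 \/ (qdeg q f.2 + (k - 1) < qdeg q f.1)%N).
Proof.
move=> q1 H1 H2 Hnz; rewrite /lpos /lm.
have [Hm Hm2 Hmax] := lm_spec k (supp_small q f).
move: Hm Hm2 Hmax; set m := foldr _ _ _ => Hm Hm2 Hmax Em.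
case: (eqVneq f.2 0) => [E2|n2].
  by split; [by move: Hnz; rewrite E2 eqxx orbF | left].
have T2 := supp_top (j := 2%N) q1 isT erefl H2 n2.
have := Hmax _ T2; rewrite /rk /wdeg /Defs.coord /= Em /= => Hle.
case: Hm => [Em0|Ms].
  exfalso; rewrite Em0 /= in Hle; move: Hle; move: (qdeg q f.2) (k - 1)%N => a b Hle; lia.
case: m Em Ms Hle {Hmax Hm2} => i j /= -> Ms Hle.
have [n1 Hi] := supp_le (h := f.1) q1 Ms erefl H1.
by split => //; right; lia.
Qed.

Lemma lpos2_spec (L : fieldType) q k (f : lpair L) :
  (1 < q)%N -> linearized q f.1 -> linearized q f.2 ->
  lpos q k f = 2%N ->
  f.2 != 0 /\ (f.1 = 0 \/ (qdeg q f.1 <= qdeg q f.2 + (k - 1))%N).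
Proof.
move=> q1 H1 H2; rewrite /lpos /lm.
have [Hm Hm2 Hmax] := lm_spec k (supp_small q f).
move: Hm Hm2 Hmax; set m := foldr _ _ _ => Hm Hm2 Hmax Em.
case: Hm => [Em0|Ms]; first by rewrite Em0 in Em.
case: m Em Ms Hmax {Hm2} => i j /= Ej Ms Hmax; subst j.
have [n2 Hi] := supp_le (h := f.2) q1 Ms erefl H2.
split => //; case: (eqVneq f.1 0) => [E1|n1]; first by left.
have T1 := supp_top (j := 1%N) q1 isT erefl H1 n1.
have := Hmax _ T1; rewrite /rk /wdeg /Defs.coord /= => H.
by right; lia.
Qed.

Lemma frobB (R : comNzRingType) q (x y : R) : [pchar R].-nat q ->
  (x - y) ^+ q = x ^+ q - y ^+ q.
Proof.
by move=> H; apply/eqP; rewrite eq_sym subr_eq -frobD // subrK.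
Qed.

Lemma size_XqX (L : fieldType) q : (1 < q)%N -> size ('X^q - 'X : {poly L}) = q.+1.
Proof.
by move=> q1; rewrite size_polyDl size_polyXn // size_polyN size_polyX ltnS.
Qed.

Lemma card_Fq (L : finFieldType) q m :
  (1 < q)%N -> (1 <= m)%N -> #|L| = (q ^ m)%N -> [pchar L].-nat q ->
  #|[set x : L | x ^+ q == x]| = q.
Proof.
move=> q1 m1 HL Hc; set Fq := [set x : L | x ^+ q == x].
set P : {poly L} := 'X^q - 'X.
have HcP := charpolyq Hc.
have Hdiv : forall j, P %| 'X^(q ^ j) - 'X.
  elim=> [|j IH]; first by rewrite expn0 subrr dvdp0.
  have -> : ('X^(q ^ j.+1) - 'X : {poly L}) = ('X^(q ^ j) - 'X) ^+ q + P.
    by rewrite frobB // -exprM -expnSr /P addrA subrK.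
  by rewrite dvdp_add // dvdp_exp // ltnW.
have P0 : P != 0 by rewrite -size_poly_eq0 size_XqX.
have [R ER] : exists R, 'X^(q ^ m) - 'X = R * P by apply/dvdpP.
have qm : (q <= q ^ m)%N by rewrite -{1}(expn1 q) leq_pexp2l // ltnW.
have Gsz : size ('X^(q ^ m) - 'X : {poly L}) = (q ^ m).+1.
  by apply: size_XqX; apply: leq_trans qm.
have R0 : R != 0 by apply: contra_eq_neq ER => ->; rewrite mul0r -size_poly_eq0 Gsz.
have Rsz : size R = ((q ^ m) - q)%N.+1.
  move: Gsz; rewrite ER size_mul // /P size_XqX // addnS /= => H; move: H qm; move: (q ^ m)%N => Q H qm'.
  have E : size R = (size R + q - q)%N by rewrite addnK.
  rewrite [in RHS]H in E; rewrite E; lia.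
have up : (#|Fq| < q.+1)%N.
  rewrite cardE -(size_XqX L q1); apply: max_poly_roots => //; last exact: enum_uniq.
  apply/allP => x; rewrite mem_enum inE => /eqP Hx.
  by rewrite /root /P hornerD hornerN hornerXn hornerX Hx subrr.
have lo : (#|[predC Fq]| < size R)%N.
  rewrite cardE; apply: max_poly_roots => //; last exact: enum_uniq.
  apply/allP => x; rewrite mem_enum inE /= inE => Hx.
  have : ('X^(q ^ m) - 'X).[x] = 0.
    by rewrite hornerD hornerN hornerXn hornerX -HL expf_card subrr.
  rewrite ER hornerM => /eqP; rewrite mulf_eq0 => /orP [//|].
  by rewrite /P hornerD hornerN hornerXn hornerX subr_eq0 (negbTE Hx).
have := cardC Fq; rewrite HL Rsz in lo *; move=> E; move: E lo up qm; move: (q ^ m)%N => Q.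
lia.
Qed.

Fixpoint Sp (L : fieldType) (q : nat) (s : seq L) : {poly L} :=
  match s with
  | [::] => 'X
  | g :: s' => Sp q s' ^+ q - ((Sp q s').[g] ^+ q.-1) *: Sp q s'
  end.

Lemma Sp_lin (L : fieldType) q (s : seq L) :
  (1 < q)%N -> [pchar L].-nat q -> linearized q (Sp q s).
Proof.
move=> q1 Hc; elim: s => [|g s IH] /=.
  by rewrite -['X]expr1 -(expn0 q); apply: linXq.
by apply: linB; [apply: lin_powq | apply: linZ].
Qed.

Lemma Sp_size (L : fieldType) q (s : seq L) :
  (1 < q)%N -> size (Sp q s) = (q ^ size s)%N.+1 /\ Sp q s \is monic.
Proof.
move=> q1; elim: s => [|g s [IHs IHm]] /=; first by rewrite size_polyX monicX.
have Hsz : size (Sp q s ^+ q) = (q ^ (size s).+1)%N.+1.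
  have := size_exp (Sp q s) q; rewrite IHs /= -expnSr => E.
  by rewrite -E prednK // size_poly_gt0 monic_neq0 // monic_exp.
have Hlt : (size (- ((Sp q s).[g] ^+ q.-1 *: Sp q s)) < size (Sp q s ^+ q))%N.
  rewrite size_polyN Hsz; apply: leq_ltn_trans (size_scale_leq _ _) _.
  by rewrite IHs ltnS expnSr -{1}(muln1 (q ^ size s)%N) ltn_mul2l expn_gt0 q1 ltnW.
split; first by rewrite size_polyDl.
by rewrite monicE lead_coefDl // -monicE monic_exp.
Qed.

Lemma Sp_root (L : fieldType) q (s : seq L) x :
  (0 < q)%N -> x \in s -> (Sp q s).[x] = 0.
Proof.
move=> q0; elim: s => //= g s IH; rewrite in_cons => /orP [/eqP ->|Hx].
  by rewrite hornerD hornerN hornerZ horner_exp -exprSr prednK // subrr.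
by rewrite hornerD hornerN hornerZ horner_exp IH // expr0n eqn0Ngt q0 mulr0 subrr.
Qed.

Lemma Sp_span (L : fieldType) q n (g : n.-tuple L) (c : 'I_n -> L) :
  (1 < q)%N -> [pchar L].-nat q -> (forall i, c i ^+ q = c i) ->
  (Sp q g).[\sum_(i < n) c i * g`_i] = 0.
Proof.
move=> q1 Hc Hci; have HS := @Sp_lin _ q g q1 Hc.
rewrite (@lin_horner_sum _ q (Sp q g) _ _ _ _ q1 Hc HS).
apply: big1 => i _; rewrite (@lin_hornerFq _ q _ _ _ q1 HS) //.
by rewrite (@Sp_root _ q _ _ (ltnW q1)) ?mulr0 // mem_nth // size_tuple.
Qed.

Definition Dpred (L : finFieldType) (q n : nat) (c : {ffun 'I_n -> L}) : bool :=
  [forall i, c i ^+ q == c i].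
Definition Dset (L : finFieldType) (q n : nat) : {set {ffun 'I_n -> L}} :=
  [set c | Dpred q c].

Lemma span_card (L : finFieldType) q m n (g : n.-tuple L) :
  (1 < q)%N -> (1 <= m)%N -> #|L| = (q ^ m)%N -> [pchar L].-nat q ->
  Fq_lin_indep q g -> #|Fq_span q g| = (q ^ n)%N.
Proof.
move=> q1 m1 HL Hc Hind.
set D := Dset L q n.
have E : Fq_span q g = [set (\sum_(i < n) c i * g`_i) | c : {ffun 'I_n -> L} in D].
  apply/setP => x; rewrite inE; apply/existsP/imsetP.
    by move=> [c /andP [Hc' /eqP ->]]; exists c; rewrite // inE.
  by move=> [c Hc' ->]; exists c; rewrite inE /Dpred in Hc'; rewrite Hc' eqxx.
rewrite E card_in_imset.
  have -> : #|D| = #|ffun_on_mem 'I_n (mem [set x : L | x ^+ q == x])|.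
    apply: eq_card => c; rewrite inE /Dpred; apply/forallP/ffun_onP => H i.
      by rewrite inE; exact: H.
    by have := H i; rewrite inE.
  by rewrite card_ffun_on card_ord (card_Fq q1 m1 HL Hc).
move=> c c'; rewrite !inE /Dpred => /forallP Hc1 /forallP Hc2 Heq.
apply/ffunP => i; apply/eqP; rewrite -subr_eq0; apply/eqP.
apply: (Hind (fun i => c i - c' i)).
  by move=> j; rewrite frobB // (eqP (Hc1 j)) (eqP (Hc2 j)).
by rewrite -[RHS](subrr (\sum_(i < n) c' i * g`_i)) -{1}Heq -sumrB;
  apply: eq_bigr => j _; rewrite mulrBl.
Qed.

Lemma Pi_Sp (L : finFieldType) q m n (g : n.-tuple L) :
  (1 < q)%N -> (1 <= m)%N -> #|L| = (q ^ m)%N -> [pchar L].-nat q ->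
  Fq_lin_indep q g -> Pi_g q g = Sp q g.
Proof.
move=> q1 m1 HL Hc Hind.
have [Hsz Hmon] := Sp_size g q1.
have := @all_roots_prod_XsubC _ (Sp q g) (enum (Fq_span q g)).
rewrite -cardE (span_card q1 m1 HL Hc Hind) Hsz size_tuple uniq_rootsE enum_uniq.
move=> H; rewrite H //; first by rewrite (monicP Hmon) scale1r big_enum.
apply/allP => x; rewrite mem_enum inE => /existsP [c /andP [/forallP Hc' /eqP ->]].
by rewrite /root Sp_span // => i; apply/eqP.
Qed.

Lemma det_lastcol_lin (L : fieldType) q n (A : 'M[{poly L}]_n.+1) :
  (forall i j, j != ord_max -> exists c, A i j = c%:P) ->
  (forall i, linearized q (A i ord_max)) -> linearized q (\det A).
Proof.
move=> Hc Hl; rewrite (expand_det_col A ord_max); apply: lin_sum => i _.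
set B := \matrix_(a, b) ((row' i (col' ord_max A)) a b)`_0.
have EB : row' i (col' ord_max A) = map_mx polyC B.
  apply/matrixP => a b; rewrite !mxE.
  have Hb : lift ord_max b != ord_max by rewrite eq_sym neq_lift.
  have [c ->] := Hc (lift i a) (lift ord_max b) Hb.
  by rewrite coefC eqxx.
rewrite /cofactor EB det_map_mx /=.
rewrite mulrCA -signr_odd; case: (odd _); rewrite ?expr1 ?expr0 ?mul1r ?mulN1r;
  try apply: linN; rewrite mulrC mul_polyC; apply: linZ; exact: Hl.
Qed.

Lemma Lambda_lin (L : fieldType) q n (g r : n.-tuple L) :
  linearized q (Lambda q g r).
Proof.
rewrite /Lambda; apply: lin_sum => i _; apply: linZ.
case: n g r i => [|n] g r i; first by case: i.
apply: det_lastcol_lin => [a b Hb|a].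
  rewrite mxE; case: ifP => [_|]; first by eexists.
  move=> Hf; exfalso; move: Hb; rewrite -val_eqE /= => Hb.
  have := ltn_ord b; rewrite ltnS leq_eqVlt (negbTE Hb) /= => Hb'.
  by rewrite ltnS Hb' in Hf.
rewrite mxE /= ltnn; exact: linXq.
Qed.

Lemma size_sub_same (L : fieldType) (a b : {poly L}) :
  size a = size b -> lead_coef a = lead_coef b -> a != 0 ->
  (size (a - b)%R < size a)%N.
Proof.
move=> Es El a0; have s0 : (0 < size a)%N by rewrite size_poly_gt0.
have : (size (a - b)%R <= (size a).-1)%N.
  apply/leq_sizeP => j; rewrite leq_eqVlt => /orP [/eqP <-|Hj].
    by rewrite coefB -lead_coefE Es -lead_coefE El subrr.
  rewrite coefB; have /leq_sizeP -> := leqnn (size a); last by rewrite -(prednK s0).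
  by have /leq_sizeP -> := leqnn (size b); rewrite ?subrr // -Es -(prednK s0).
by move/leq_ltn_trans; apply; rewrite prednK.
Qed.

Lemma lin_div (L : fieldType) q n (Pi P : {poly L}) :
  (1 < q)%N -> [pchar L].-nat q -> linearized q Pi -> Pi \is monic ->
  Dg Pi = (q ^ n)%N -> linearized q P ->
  exists beta, linearized q beta /\ (Dg (P - (beta \Po Pi))%R < q ^ n)%N.
Proof.
move=> q1 Hc HPi Mon DPi.
elim: (size P).+1 {-2}P (ltnSn (size P)) => // s IH {}P Hs HP.
case: (ltnP (Dg P) (q ^ n)) => Hd.
  by exists 0; split; [exact: lin0 | rewrite comp_poly0 subr0].
have P0 : P != 0.
  by apply: contraTneq Hd => ->; rewrite Dg0 -ltnNge expn_gt0 ltnW.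
set p := qdeg q P.
have DP := lin_Dg q1 HP P0.
have pn : (n <= p)%N by rewrite -(leq_exp2l _ _ q1) -DP.
set b1 := lead_coef P *: 'X^(q ^ (p - n))%N : {poly L}.
have Lb1 : linearized q b1 by apply: linZ; exact: linXq.
have Eb1 : b1 \Po Pi = lead_coef P *: Pi ^+ (q ^ (p - n))%N.
  by rewrite comp_polyZ comp_Xn_poly.
have Mexp : Pi ^+ (q ^ (p - n))%N \is monic by apply: monic_exp.
have Sexp : size (Pi ^+ (q ^ (p - n))%N) = size P.
  have E := size_exp Pi (q ^ (p - n))%N.
  rewrite -/(Dg Pi) DPi -expnD subnKC // -/p -DP in E.
  rewrite -[size (Pi ^+ _)]prednK; last by rewrite size_poly_gt0 monic_neq0.
  by rewrite E /Dg prednK // size_poly_gt0.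
have lcP0 : lead_coef P != 0 by rewrite lead_coef_eq0.
have Hlt : (size (P - (b1 \Po Pi))%R < size P)%N.
  apply: size_sub_same => //.
    by rewrite Eb1 size_scale.
  by rewrite Eb1 lead_coefZ (monicP Mexp) mulr1.
have HP1 : linearized q (P - (b1 \Po Pi)) by apply: linB => //; apply: lin_comp.
have [b2 [Lb2 Hb2]] := IH _ (leq_trans Hlt Hs) HP1.
exists (b1 + b2); split; first exact: linD.
by rewrite comp_polyD opprD addrA.
Qed.

Definition linp (L : fieldType) (q e : nat) (u : {ffun 'I_e -> L}) : {poly L} :=
  \sum_(i < e) u i *: 'X^(q ^ i).

Lemma lin_linp (L : fieldType) q e (u : {ffun 'I_e -> L}) : linearized q (linp q u).
Proof. by apply: lin_sum => i _; apply: linZ; exact: linXq. Qed.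

Lemma linp_coef (L : fieldType) q e (u : {ffun 'I_e -> L}) (i : 'I_e) :
  (1 < q)%N -> (linp q u)`_(q ^ i) = u i.
Proof.
move=> q1; rewrite /linp coef_sum (bigD1 i) //= coefZ coefXn eqxx mulr1 big1 ?addr0 //.
move=> j Hj; rewrite coefZ coefXn; case: (eqVneq (q ^ i)%N (q ^ j)%N) => [/(expnI q1) E|_].
  by move: Hj; rewrite -val_eqE /= E eqxx.
by rewrite mulr0.
Qed.

Lemma linp_inj (L : fieldType) q e (u v : {ffun 'I_e -> L}) :
  (1 < q)%N -> linp q u = linp q v -> u = v.
Proof.
move=> q1 E; apply/ffunP => i; by rewrite -(linp_coef u i q1) -(linp_coef v i q1) E.
Qed.

Lemma Dg_linp (L : fieldType) q e (u : {ffun 'I_e.+1 -> L}) :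
  (1 < q)%N -> (Dg (linp q u) <= q ^ e)%N.
Proof.
move=> q1; have : (size (linp q u) <= (q ^ e).+1)%N.
  apply/leq_sizeP => j Hj; rewrite /linp coef_sum big1 // => i _.
  rewrite coefZ coefXn; case: (eqVneq j (q ^ i)%N) => [E|_]; last by rewrite mulr0.
  exfalso; move: Hj; rewrite E ltnNge => /negP; apply.
  by rewrite leq_exp2l // -ltnS.
by rewrite /Dg; case: (size _).
Qed.

Lemma linp_surj (L : fieldType) q e (b : {poly L}) :
  (1 < q)%N -> linearized q b -> (Dg b <= q ^ e)%N ->
  b = linp q [ffun i : 'I_e.+1 => b`_(q ^ i)].
Proof.
move=> q1 Hb Hd; rewrite {1}(@lin_repr_gen _ q b e.+1) //.
  by apply: eq_bigr => i _; rewrite ffunE.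
move=> j Hj; apply: leq_Dg_coef; apply: leq_ltn_trans Hd _.
by rewrite ltn_exp2l.
Qed.

Lemma Dg_addl (L : fieldType) (P Q : {poly L}) : (Dg Q < Dg P)%N -> Dg (P + Q) = Dg P.
Proof.
move=> H; rewrite /Dg size_polyDl //; move: H; rewrite /Dg.
case: (size Q) => [|sq]; case: (size P) => [|sp] //=; lia.
Qed.

Lemma Dg_add_le (L : fieldType) (P Q : {poly L}) : (Dg (P + Q) <= maxn (Dg P) (Dg Q))%N.
Proof.
have := size_polyD P Q; rewrite /Dg.
case: (size (P + Q)) => [|s]; case: (size P) => [|sp]; case: (size Q) => [|sq] /=; lia.
Qed.

Lemma DgN (L : fieldType) (P : {poly L}) : Dg (- P) = Dg P.
Proof. by rewrite /Dg size_polyN. Qed.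

Lemma arith_pred (x y QA QD DB DC w QN F1 F2 : nat) :
  (DB * w < QA)%N -> (DC <= QD * w)%N -> (0 < w)%N -> (0 < QD)%N ->
  (F1 <= maxn (x * QA) (y * DC))%N -> ((y * DC < x * QA)%N -> F1 = x * QA) ->
  (F2 <= maxn (x * DB) (y * QD))%N -> ((x * DB < y * QD)%N -> F2 = y * QD) ->
  ((F1 <= QN) && (F2 * w <= QN))%N = ((x * QA <= QN) && (y * QD * w <= QN))%N.
Proof.
move=> HB HC w0 QD0 F1le F1eq F2le F2eq.
have YcD : (y * DC <= y * QD * w)%N by rewrite -mulnA leq_mul2l HC orbT.
have XbA : (x * DB * w <= x * QA)%N by rewrite -mulnA leq_mul2l ltnW ?orbT.
apply/andP/andP => [[H1 H2]|[H1 H2]].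
  case: (ltnP (y * QD * w) (x * QA)) => H.
    have E1 : F1 = (x * QA)%N := F1eq (leq_ltn_trans YcD H).
    split; first by rewrite -E1.
    by apply: ltnW; apply: (leq_trans H); rewrite -E1.
  case: (posnP y) => [y0|yp].
    by move: H; rewrite y0 !mul0n leqn0 => /eqP ->; split.
  have Xb : (x * DB < y * QD)%N.
    case: (posnP x) => [->|xp]; first by rewrite mul0n muln_gt0 yp.
    rewrite -(ltn_pmul2r w0); apply: leq_trans H.
    by rewrite -mulnA ltn_pmul2l.
  have E2 := F2eq Xb; rewrite E2 in H2; split => //; exact: leq_trans H H2.
split.
  apply: leq_trans F1le _; rewrite geq_max H1 /=; exact: leq_trans YcD H2.
apply: leq_trans (leq_mul F2le (leqnn w)) _; rewrite maxnMl geq_max H2 andbT.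
exact: leq_trans XbA H1.
Qed.

Lemma count_core (L : finFieldType) q n k (Pi Lam : {poly L}) (M : lpair L -> Prop)
    (b1 b2 : lpair L) a d :
  (1 < q)%N -> [pchar L].-nat q -> (1 <= k)%N ->
  linearized q Pi -> Pi \is monic -> Dg Pi = (q ^ n)%N -> linearized q Lam ->
  (forall f, M f <-> exists beta gamma : {poly L}, [/\ linearized q beta,
      linearized q gamma & f = padd (Defs.pcomp beta (Pi, 0)) (Defs.pcomp gamma (- Lam, 'X))]) ->
  is_basis2 q M b1 b2 ->
  linearized q b1.1 -> linearized q b1.2 -> linearized q b2.1 -> linearized q b2.2 ->
  Dg b1.1 = (q ^ a)%N -> Dg b2.2 = (q ^ d)%N ->
  (Dg b1.2 * q ^ (k - 1) < q ^ a)%N -> (Dg b2.1 <= q ^ d * q ^ (k - 1))%N ->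
  (a + d)%N = n.
Proof.
move=> q1 Hc k1 LPi MPi DPi LLam HM [Mb1 Mb2 Hgen Hind] LA LB LC LD DA DD HB HC.
set w := (q ^ (k - 1))%N in HB HC *.
set N := (n + a + d + k)%N.
have qp : forall t, (0 < q ^ t)%N by move=> t; rewrite expn_gt0 ltnW.
have w0 : (0 < w)%N by exact: qp.
have EqA : (q ^ N = q ^ (N - a) * q ^ a)%N by rewrite -expnD subnK // /N; lia.
have EqD : (q ^ N = q ^ (N - (d + (k - 1))) * q ^ d * w)%N.
  by rewrite /w -!expnD -addnA subnK // /N; lia.
have EqN : (q ^ N = q ^ (N - n) * q ^ n)%N by rewrite -expnD subnK // /N; lia.
have EqK : (q ^ N = q ^ (N - (k - 1)) * w)%N by rewrite /w -expnD subnK // /N; lia.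
have NF : forall beta gamma, linearized q beta -> linearized q gamma ->
    padd (Defs.pcomp beta (Pi, 0)) (Defs.pcomp gamma (- Lam, 'X)) =
    ((beta \Po Pi) - (gamma \Po Lam), gamma).
  move=> be ga Lbe Lga; rewrite /padd /Defs.pcomp /=.
  rewrite (lin_compN _ q1 Hc Lga) comp_poly0r (lin_coef0 (ltnW q1) Lbe) comp_polyXr.
  by rewrite polyC0 add0r.
pose W (f : lpair L) := ((Dg f.1 <= q ^ N) && (Dg f.2 * w <= q ^ N))%N.
have pred1 : forall be ga, linearized q be -> linearized q ga ->
    W (padd (Defs.pcomp be b1) (Defs.pcomp ga b2)) =
    ((Dg be <= q ^ (N - a)) && (Dg ga <= q ^ (N - (d + (k - 1)))))%N.
  move=> be ga Lbe Lga; rewrite /W /padd /Defs.pcomp /=.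
  rewrite (@arith_pred (Dg be) (Dg ga) (q ^ a)%N (q ^ d)%N (Dg b1.2) (Dg b2.1) w (q ^ N)%N
     _ _ HB HC w0 (qp d)).
  - congr andb; first by rewrite EqA leq_pmul2r.
    by rewrite EqD -!mulnA leq_pmul2r // muln_gt0 qp w0.
  - apply: leq_trans (Dg_add_le _ _) _; by rewrite !Dg_comp DA.
  - by move=> H; rewrite Dg_addl !Dg_comp DA //; rewrite !Dg_comp DA in H.
  - by apply: leq_trans (Dg_add_le _ _) _; rewrite !Dg_comp DD.
  - by move=> H; rewrite addrC Dg_addl !Dg_comp DD //; rewrite !Dg_comp DD in H.
pose T1 := ({ffun 'I_(N - a).+1 -> L} * {ffun 'I_(N - (d + (k - 1))).+1 -> L})%type.
pose F1 (uv : T1) := padd (Defs.pcomp (linp q uv.1) b1) (Defs.pcomp (linp q uv.2) b2).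
have Img1 : forall f, (exists uv : T1, f = F1 uv) <-> (M f /\ W f).
  move=> f; split.
    move=> [[u v] ->]; split; first by apply/Hgen; exists (linp q u), (linp q v); split => //; exact: lin_linp.
    by rewrite /F1 pred1 /= ?Dg_linp //; apply: lin_linp.
  move=> [Mf Wf]; move/Hgen: Mf => [be [ga [Lbe Lga Ef]]].
  move: Wf; rewrite Ef pred1 // => /andP [H1 H2].
  exists ([ffun i : 'I_(N - a).+1 => be`_(q ^ i)], [ffun i : 'I_(N - (d + (k - 1))).+1 => ga`_(q ^ i)]).
  by rewrite /F1 /= -!linp_surj.
have inj1 : injective F1.
  move=> [u v] [u' v'] /= E.
  have E1 : padd (Defs.pcomp (linp q u - linp q u') b1) (Defs.pcomp (linp q v - linp q v') b2) = pzero L.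
    move: E; rewrite /F1 /padd /Defs.pcomp /= => [[E1 E2]].
    by rewrite /padd /Defs.pcomp /pzero /= !comp_polyB; congr pair;
      rewrite addrACA -opprD; apply/eqP; rewrite subr_eq0; apply/eqP.
  have [Hu Hv] := Hind _ _ (linB (@lin_linp _ q _ u) (@lin_linp _ q _ u')) (linB (@lin_linp _ q _ v) (@lin_linp _ q _ v')) E1.
  by congr pair; apply: (linp_inj q1); apply/eqP; rewrite -subr_eq0; apply/eqP.
have Hdiv : forall v : {ffun 'I_(N - (k - 1)).+1 -> L}, exists be : {poly L},
    linearized q be /\ (Dg ((linp q v \Po Lam) - (be \Po Pi))%R < q ^ n)%N.
  move=> v; apply: (lin_div q1 Hc LPi MPi DPi); apply: lin_comp => //; exact: lin_linp.
have [b0 Hb0] := fin_all_exists Hdiv.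
pose rho (v : {ffun 'I_(N - (k - 1)).+1 -> L}) := (linp q v \Po Lam) - (b0 v \Po Pi).
pose T2 := ({ffun 'I_(N - n).+1 -> L} * {ffun 'I_(N - (k - 1)).+1 -> L})%type.
pose F2 (uv : T2) : lpair L :=
  (((linp q uv.1 + b0 uv.2) \Po Pi) - (linp q uv.2 \Po Lam), linp q uv.2).
have EF2 : forall uv : T2, F2 uv = ((linp q uv.1 \Po Pi) - rho uv.2, linp q uv.2).
  by move=> [u v]; rewrite /F2 /rho /= comp_polyD opprB addrA.
have deg2 : forall de rh : {poly L}, (Dg rh < q ^ n)%N ->
    (Dg ((de \Po Pi) - rh) <= q ^ N)%N = (Dg de <= q ^ (N - n))%N.
  move=> de rh Hrh; apply/idP/idP => H.
    case: (ltnP (Dg rh) (Dg de * q ^ n)) => H'.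
      move: H; rewrite Dg_addl; last by rewrite DgN Dg_comp DPi.
      by rewrite Dg_comp DPi EqN leq_pmul2r.
    have : (Dg de * q ^ n < 1 * q ^ n)%N by rewrite mul1n; exact: leq_ltn_trans H' Hrh.
    by rewrite ltn_pmul2r // ltnS leqn0 => /eqP ->.
  apply: leq_trans (Dg_add_le _ _) _; rewrite geq_max DgN Dg_comp DPi.
  rewrite EqN leq_pmul2r // H /=; apply: ltnW; apply: leq_trans Hrh _.
  by rewrite -EqN leq_exp2l // /N; lia.
have Img2 : forall f, (exists uv : T2, f = F2 uv) <-> (M f /\ W f).
  move=> f; split.
    move=> [[u v] ->]; split.
      apply/HM; exists (linp q u + b0 v), (linp q v); split.
      - by apply: linD; [exact: lin_linp | case: (Hb0 v)].
      - exact: lin_linp.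
      - by rewrite NF //; [apply: linD; [exact: lin_linp | case: (Hb0 v)] | exact: lin_linp].
    rewrite EF2 /W /= deg2; last by case: (Hb0 v).
    by rewrite Dg_linp // EqK leq_pmul2r // Dg_linp.
  move=> [Mf Wf]; move/HM: Mf => [be [ga [Lbe Lga Ef]]].
  move: Wf; rewrite Ef NF // /W /= => /andP [H1 H2].
  have H2' : (Dg ga <= q ^ (N - (k - 1)))%N by rewrite -(leq_pmul2r w0) -EqK.
  set v := [ffun i : 'I_(N - (k - 1)).+1 => ga`_(q ^ i)].
  have Ev : ga = linp q v := linp_surj q1 Lga H2'.
  set de := be - b0 v.
  have Lde : linearized q de by apply: linB => //; case: (Hb0 v).
  have Ede : (be \Po Pi) - (ga \Po Lam) = (de \Po Pi) - rho v.
    by rewrite /de /rho Ev comp_polyB opprB addrA subrK.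
  rewrite Ede deg2 in H1; last by case: (Hb0 v).
  set u := [ffun i : 'I_(N - n).+1 => de`_(q ^ i)].
  have Eu : de = linp q u := linp_surj q1 Lde H1.
  exists (u, v); rewrite EF2 /= -Eu -Ev -Ede.
  done.
have inj2 : injective F2.
  move=> [u v] [u' v']; rewrite !EF2 /= => [[E1 E2]].
  have Evv := linp_inj q1 E2; subst v'.
  move/addIr: E1 => /eqP; rewrite -subr_eq0 -comp_polyB => /eqP E.
  have : (Dg (linp q u - linp q u') == 0)%N.
    have qn0 : (q ^ n != 0)%N by rewrite -lt0n qp.
    have : (Dg (linp q u - linp q u') * q ^ n == 0)%N by rewrite -DPi -Dg_comp E Dg0.
    by rewrite muln_eq0 (negbTE qn0) orbF.
  rewrite (lin_Dg_eq0 q1); last by apply: linB; exact: lin_linp.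
  by rewrite subr_eq0 => /eqP /(linp_inj q1) ->.
have U1 : uniq (map F1 (enum {: T1})) by rewrite map_inj_uniq ?enum_uniq.
have U2 : uniq (map F2 (enum {: T2})) by rewrite map_inj_uniq ?enum_uniq.
have Eq : map F1 (enum {: T1}) =i map F2 (enum {: T2}).
  move=> f; apply/mapP/mapP => [[uv _ Ef]|[uv _ Ef]].
    have [uv2 E2] : exists uv2 : T2, f = F2 uv2 by apply/Img2; apply/Img1; exists uv.
    by exists uv2; rewrite ?mem_enum.
  have [uv2 E2] : exists uv2 : T1, f = F1 uv2 by apply/Img1; apply/Img2; exists uv.
  by exists uv2; rewrite ?mem_enum.
have := perm_size (uniq_perm U1 U2 Eq); rewrite !size_map -!enumT -!cardT !card_prod !card_ffun !card_ord -!expnD.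
move/eqP; rewrite eqn_exp2l ?finNzRing_gt1 // /N => /eqP; lia.
Qed.


Lemma linX (L : fieldType) q : linearized q ('X : {poly L}).
Proof. by rewrite -['X]expr1 -(expn0 q); apply: linXq. Qed.

Lemma qdeg0 (L : fieldType) q : qdeg q (0 : {poly L}) = 0%N.
Proof. by rewrite /qdeg size_poly0 /= trunc_log0. Qed.

Unset Implicit Arguments.

Theorem lemma31 (q m n k : nat) (L : finFieldType) (g r : n.-tuple L)
    (b1 b2 : lpair L) :
  (exists p e : nat, [/\ prime p, (0 < e)%N & q = (p ^ e)%N]) ->
  (1 <= m)%N -> #|L| = (q ^ m)%N ->
  (1 <= k)%N -> (k <= n)%N ->
  Fq_lin_indep q g ->
  is_minimal_basis2 q k (Mmod q g r) b1 b2 ->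
  lpos q k b1 = 1%N -> lpos q k b2 = 2%N ->
  (wqdeg q k b1 + wqdeg q k b2)%N = (n + k - 1)%N /\
  (qdeg q b1.1 + qdeg q b2.2)%N = n.
Proof.
move=> [p [e [pp e0 Eqq]]] m1 HL k1 kn Hind [Hbasis _ _] Hl1 Hl2.
have Hbasis' := Hbasis; case: Hbasis' => Mb1 Mb2 Hgen Hindb.
have q1 : (1 < q)%N.
  rewrite Eqq; apply: (@leq_trans p); first exact: prime_gt1.
  by rewrite -{1}(expn1 p) leq_pexp2l // prime_gt0.
have Hp : p \in [pchar L].
  by apply: (@card_finPcharP _ _ (e * m)%N) => //; rewrite HL Eqq expnM.
have Hc : [pchar L].-nat q by rewrite Eqq (eq_pnat _ (pcharf_eq Hp)) pnatX pnat_id.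
have EPi := Pi_Sp q1 m1 HL Hc Hind.
have LPi : linearized q (Pi_g q g) by rewrite EPi; exact: Sp_lin.
have [SPi MPi'] := Sp_size g q1.
have MPi : Pi_g q g \is monic by rewrite EPi.
have DPi : Dg (Pi_g q g) = (q ^ n)%N by rewrite EPi /Dg SPi size_tuple.
have LLam := @Lambda_lin _ q n g r.
have Mlin : forall f, Mmod q g r f -> linearized q f.1 /\ linearized q f.2.
  move=> f [be [ga [Lbe Lga ->]]]; rewrite /padd /Defs.pcomp /=; split.
    by apply: linD; apply: lin_comp => //; apply: linN.
  by apply: linD; apply: lin_comp => //; [exact: lin0 | exact: linX].
have [LA LB] := Mlin _ Mb1.
have [LC LD] := Mlin _ Mb2.
have Hnz : (b1.1 != 0) || (b1.2 != 0).
  case: (eqVneq b1.1 0) => [E1|n1] //=.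
  case: (eqVneq b1.2 0) => [E2|n2]; last by rewrite ?orbT.
  exfalso.
  have := Hindb 'X 0 (@linX L q) (@lin0 L q).
  rewrite /padd /Defs.pcomp !comp_polyX !comp_poly0 E1 E2 !addr0 => H.
  by case: H => // /eqP; rewrite polyX_eq0.
have [nA HB'] := lpos1_spec q1 LA LB Hnz Hl1.
have [nD HC'] := lpos2_spec q1 LC LD Hl2.
set a := qdeg q b1.1 in HB' *.
set d := qdeg q b2.2 in HC' *.
have DA := lin_Dg q1 LA nA.
have DD := lin_Dg q1 LD nD.
have HB : (Dg b1.2 * q ^ (k - 1) < q ^ a)%N.
  case: (eqVneq b1.2 0) => [->|nB]; first by rewrite Dg0 mul0n expn_gt0 ltnW.
  case: HB' => [E|H]; first by rewrite E eqxx in nB.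
  by rewrite (lin_Dg q1 LB nB) -expnD ltn_exp2l.
have HC : (Dg b2.1 <= q ^ d * q ^ (k - 1))%N.
  case: (eqVneq b2.1 0) => [->|nC]; first by rewrite Dg0.
  case: HC' => [E|H]; first by rewrite E eqxx in nC.
  by rewrite (lin_Dg q1 LC nC) -expnD leq_exp2l.
have key := @count_core L q n k (Pi_g q g) (Lambda q g r) (Mmod q g r) b1 b2 a d
  q1 Hc k1 LPi MPi DPi LLam (fun f => iff_refl _) Hbasis LA LB LC LD DA DD HB HC.
have W1 : wqdeg q k b1 = a.
  rewrite /wqdeg; case: (eqVneq b1.2 0) => [E|nB] /=; first by rewrite maxn0.
  case: HB' => [E|H]; first by rewrite E eqxx in nB.
  by apply/maxn_idPl; apply: ltnW.
have W2 : wqdeg q k b2 = (d + (k - 1))%N.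
  rewrite /wqdeg (negbTE nD) /=; apply/maxn_idPr.
  case: (eqVneq b2.1 0) => [->|nC]; first by rewrite qdeg0.
  by case: HC' => [E|H] //; rewrite E eqxx in nC.
rewrite W1 W2; split; lia.
Qed.
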